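(* Let $(M,g)$ be a spacetime with hyperbolic symmetry whose metric, on the covering manifold $\tilde M$, is written in areal coordinates $(t,\theta,x,y)$ as \[ ds^2=-e^{2\mu}dt^2+e^{2\lambda}d\theta^2+t^2\left(dx^2+\sinh^2x\,dy^2\right), \] with $\mu,\lambda$ functions of $(t,\theta)$ only, $t>0$. Let $f$ be a distribution function (number density of particles) on the mass shell, written in terms of the coordinates $(t,\theta,x,y)$ and the corresponding canonical momenta $(p^1,p^2,p^3)$ (with $p^0$ determined by the mass-shell condition). Assume that (the pull-back of) $f$ is invariant under the action on $T\tilde M$ induced by the action of $G$ on $\tilde M$. Then $f$ depends only on \[ t,\ \theta,\ p^1,\ (p^2)^2+\sinh^2x\,(p^3)^2 . \]
   Context: Hyperbolic symmetry: $M\cong\mathbb{R}\times S^1\times F$ with $F$ a compact orientable surface of genus $>1$; $\tilde M\cong \mathbb{R}\times S^1\times\tilde F$ is the covering obtained from the universal cover $\tilde F$ of $F$, identified with the hyperbolic plane. $G$ is the identity component of the isometry group of the hyperbolic plane; it acts on $\tilde M$ via its action on the $\tilde F$ factor (in the coordinates above, on the hyperbolic surfaces $\{t,\theta=\text{const}\}$ with metric $t^2(dx^2+\sinh^2x\,dy^2)$), and the metric and matter fields pulled back to $\tilde M$ are invariant under this action. The mass shell is $\{g_{\alpha\beta}p^\alpha p^\beta=-1,\ p^0>0\}$ (particles of unit rest mass); the canonical momenta $p^\alpha$ are the components of a tangent vector in the coordinate basis. *)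

(* Defs.v *)
From Stdlib Require Import Reals.
From mathcomp Require Import all_boot all_algebra.
From mathcomp Require Import Rstruct.
Set Implicit Arguments. Unset Strict Implicit. Unset Printing Implicit Defensive.
Import GRing.Theory Num.Theory.
Local Open Scope ring_scope.

(* Hyperboloid model of the hyperbolic plane (universal cover of F):
   points X in R^3 with <X,X> = -1, X_0 > 0, for the Minkowski form
   <u,v> = -u0 v0 + u1 v1 + u2 v2.  Its tangent vectors at X are the V
   with <X,V> = 0, and the hyperbolic metric is the restriction of <.,.>. *)
Definition i0 : 'I_3 := inord 0.
Definition i1 : 'I_3 := inord 1.
Definition i2 : 'I_3 := inord 2.

Definition mink (u v : 'cV[R]_3) : R :=
  - u i0 ord0 * v i0 ord0 + u i1 ord0 * v i1 ord0 + u i2 ord0 * v i2 ord0.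

Definition Jmx : 'M[R]_3 :=
  \matrix_(i, j) (if i == j then (if i == i0 then -1 else 1) else 0).

(* G = identity component of the isometry group of the hyperbolic plane,
   i.e. SO^+(2,1) acting linearly on the hyperboloid. *)
Definition in_G (A : 'M[R]_3) : Prop :=
  A^T *m Jmx *m A = Jmx /\ \det A = 1 /\ 0 < A i0 i0.

Definition on_hyperboloid (X : 'cV[R]_3) : Prop :=
  mink X X = -1 /\ 0 < X i0 ord0.

Definition tangent_at (X V : 'cV[R]_3) : Prop := mink X V = 0.

(* A point of T(tilde M) over (t,theta,X) with momentum
   p0 d_t + p1 d_theta + V (V tangent to the hyperbolic factor),
   lying on the mass shell g(p,p) = -1, p0 > 0, for the metric
   -e^{2mu} dt^2 + e^{2lam} dtheta^2 + t^2 (hyperbolic metric). *)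
Definition mass_shell (mu lam : R -> R -> R) (t th : R) (X : 'cV[R]_3)
    (p0 p1 : R) (V : 'cV[R]_3) : Prop :=
  0 < t /\ on_hyperboloid X /\ tangent_at X V /\
  - exp (2 * mu t th) * p0 ^+ 2 + exp (2 * lam t th) * p1 ^+ 2
    + t ^+ 2 * mink V V = -1 /\ 0 < p0.

(* Polar coordinates (x,y) on the hyperbolic plane: metric dx^2 + sinh^2 x dy^2. *)
Definition coord3 (a b c : R) : 'cV[R]_3 :=
  \col_i (if i == i0 then a else if i == i1 then b else c).

Definition polar (x y : R) : 'cV[R]_3 :=
  coord3 (cosh x) (sinh x * cos y) (sinh x * sin y).

(* The tangent vector p2 d_x + p3 d_y at polar x y. *)
Definition dpolar (x y p2 p3 : R) : 'cV[R]_3 :=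
  p2 *: coord3 (sinh x) (cosh x * cos y) (cosh x * sin y)
  + p3 *: coord3 0 (- (sinh x * sin y)) (sinh x * cos y).

(* Main.v *)
Require Import Defs.
From Stdlib Require Import Reals Lra.
From mathcomp Require Import all_boot all_algebra.
From mathcomp Require Import Rstruct.
Import GRing.Theory Num.Theory.
Local Open Scope R_scope.
Lemma ch_sh_std (x : R) : (cosh x * cosh x - sinh x * sinh x = 1).
Proof.
unfold cosh, sinh. assert (E : (exp x * exp (- x) = 1)).
{ rewrite <- exp_plus. rewrite Rplus_opp_r. apply exp_0. }
nra.
Qed.
Lemma cosh_pos_std (x : R) : (0 < cosh x).
Proof. unfold cosh. generalize (exp_pos x) (exp_pos (-x)). lra. Qed.
Lemma cs_std (y : R) : (cos y * cos y + sin y * sin y = 1).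
Proof. generalize (sin2_cos2 y). unfold Rsqr. lra. Qed.
Local Close Scope R_scope.
From mathcomp Require Import ring lra.
Local Open Scope ring_scope.
Lemma ch_sh (x : R) : cosh x ^+ 2 - sinh x ^+ 2 = 1.
Proof. exact: ch_sh_std. Qed.
Lemma cosh_pos (x : R) : 0 < cosh x.
Proof. apply/RltP. exact: cosh_pos_std. Qed.
Lemma cs (y : R) : cos y ^+ 2 + sin y ^+ 2 = 1.
Proof. exact: cs_std. Qed.
Lemma i0E : i0 = ord0. Proof. by apply/val_inj; rewrite /= inordK. Qed.
Lemma RN1E : IZR (Zneg 1) = - 1 :> R. Proof. by []. Qed.
Lemma R2E : IZR (Zpos 2) = 2 :> R. Proof. by rewrite /IZR /= /IPR /= RplusE. Qed.
Ltac toMC := rewrite ?RplusE ?RminusE ?RmultE ?RoppE ?RdivE ?RinvE ?R0E ?R1E ?RN1E ?R2E.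
Lemma i0v : val i0 = 0%N. Proof. by rewrite /= inordK. Qed.
Lemma i1v : val i1 = 1%N. Proof. by rewrite /= inordK. Qed.
Lemma i2v : val i2 = 2%N. Proof. by rewrite /= inordK. Qed.

Definition M3 (a b c d e f g h k : R) : 'M[R]_3 :=
  \matrix_(i, j) nth 0 (nth [::] [:: [:: a; b; c]; [:: d; e; f]; [:: g; h; k]] i) j.

Ltac ocase i := let H := fresh in case: i => [[|[|[|?]]] H] //.
Ltac simp := rewrite ?mxE /= -?val_eqE /= ?i0v ?i1v ?i2v /=.

Lemma sum3 (F : 'I_3 -> R) : \sum_(k < 3) F k = F i0 + F i1 + F i2.
Proof.
rewrite !big_ord_recl big_ord0 addr0 addrA.
have -> : (lift ord0 (lift ord0 ord0) : 'I_3) = i2 by apply/val_inj; rewrite i2v.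
have -> : (lift ord0 ord0 : 'I_3) = i1 by apply/val_inj; rewrite i1v.
by have -> : (ord0 : 'I_3) = i0 by apply/val_inj; rewrite i0v.
Qed.

Lemma det_M3 a b c d e f g h k :
  \det (M3 a b c d e f g h k) = a*(e*k - f*h) - b*(d*k - f*g) + c*(d*h - e*g).
Proof.
rewrite (expand_det_row _ ord0) !big_ord_recl big_ord0 /cofactor.
rewrite !(expand_det_row _ ord0) !big_ord_recl !big_ord0 /cofactor !det_mx11.
rewrite !mxE /=.
ring.
Qed.

Lemma colP3 (u w : 'cV[R]_3) :
  u i0 ord0 = w i0 ord0 -> u i1 ord0 = w i1 ord0 -> u i2 ord0 = w i2 ord0 -> u = w.
Proof.
move=> H0 H1 H2; apply/matrixP => i j; rewrite (ord1 j).
have [->|[->|->]] : i = i0 \/ i = i1 \/ i = i2; try done.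
ocase i; [left|right;left|right;right]; apply/val_inj; by rewrite ?i0v ?i1v ?i2v.
Qed.

Lemma coord3E a b c : (coord3 a b c i0 ord0 = a) * (coord3 a b c i1 ord0 = b) * (coord3 a b c i2 ord0 = c).
Proof. by rewrite !mxE; simp. Qed.

Lemma M3_coord a b c d e f g h k u v w :
  M3 a b c d e f g h k *m coord3 u v w =
  coord3 (a*u + b*v + c*w) (d*u + e*v + f*w) (g*u + h*v + k*w).
Proof.
by apply: colP3; rewrite !mxE sum3 !mxE; simp.
Qed.

Lemma coord3Z r a b c : r *: coord3 a b c = coord3 (r*a) (r*b) (r*c).
Proof. by apply: colP3; rewrite !mxE; simp. Qed.
Lemma coord3D a b c a' b' c' : coord3 a b c + coord3 a' b' c' = coord3 (a+a') (b+b') (c+c').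
Proof. by apply: colP3; rewrite !mxE; simp. Qed.

Lemma minkE u w : mink u w = (u^T *m Jmx *m w) ord0 ord0.
Proof.
rewrite !mxE sum3 !mxE !sum3 !mxE; simp. rewrite /mink; toMC; ring.
Qed.

Lemma mink_inv A u w : A^T *m Jmx *m A = Jmx -> mink (A *m u) (A *m w) = mink u w.
Proof.
move=> H.
have E : u^T *m A^T *m Jmx *m A = u^T *m Jmx by rewrite -!mulmxA (mulmxA A^T Jmx A) H.
by rewrite !minkE trmx_mul !mulmxA E.
Qed.

Lemma G_mul A B : A^T *m Jmx *m A = Jmx -> B^T *m Jmx *m B = Jmx ->
  (A *m B)^T *m Jmx *m (A *m B) = Jmx.
Proof.
move=> HA HB; rewrite trmx_mul -!mulmxA (mulmxA Jmx A B) (mulmxA A^T _ B) (mulmxA A^T Jmx A) HA.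
by rewrite !mulmxA.
Qed.

Lemma M3_G a b c d e f g h k :
  -a*a + d*d + g*g = -1 -> -b*b + e*e + h*h = 1 -> -c*c + f*f + k*k = 1 ->
  -a*b + d*e + g*h = 0 -> -a*c + d*f + g*k = 0 -> -b*c + e*f + h*k = 0 ->
  (M3 a b c d e f g h k)^T *m Jmx *m M3 a b c d e f g h k = Jmx.
Proof.
move=> H1 H2 H3 H4 H5 H6.
apply/matrixP => i j; rewrite !mxE sum3 !mxE !sum3 !mxE.
ocase i; ocase j; simp; toMC; first [ (etransitivity; [|exact H1]); ring | (etransitivity; [|exact H2]); ring | (etransitivity; [|exact H3]); ring | (etransitivity; [|exact H4]); ring | (etransitivity; [|exact H5]); ring | (etransitivity; [|exact H6]); ring ].
Qed.

Lemma M3_mul a b c d e f g h k a' b' c' d' e' f' g' h' k' :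
  M3 a b c d e f g h k *m M3 a' b' c' d' e' f' g' h' k' =
  M3 (a*a' + b*d' + c*g') (a*b' + b*e' + c*h') (a*c' + b*f' + c*k')
     (d*a' + e*d' + f*g') (d*b' + e*e' + f*h') (d*c' + e*f' + f*k')
     (g*a' + h*d' + k*g') (g*b' + h*e' + k*h') (g*c' + h*f' + k*k').
Proof.
apply/matrixP => i j; rewrite !mxE sum3 !mxE; ocase i; ocase j; simp; toMC; ring.
Qed.

Definition Rot (c s : R) := M3 1 0 0 0 c (-s) 0 s c.
Definition Boost (ch sh : R) := M3 ch sh 0 sh ch 0 0 0 1.

Ltac closeH H := first [ ring | (etransitivity; [|exact H]); ring
  | (etransitivity; [|exact (f_equal (fun z => -z) H)]); ring ].

Lemma Rot_G c s : c ^+ 2 + s ^+ 2 = 1 ->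
  (Rot c s)^T *m Jmx *m Rot c s = Jmx /\ \det (Rot c s) = 1.
Proof.
move=> H; split; first by apply: M3_G; toMC; closeH H.
rewrite det_M3; toMC; closeH H.
Qed.

Lemma Boost_G ch sh : ch ^+ 2 - sh ^+ 2 = 1 ->
  (Boost ch sh)^T *m Jmx *m Boost ch sh = Jmx /\ \det (Boost ch sh) = 1.
Proof.
move=> H; split; first by apply: M3_G; toMC; closeH H.
rewrite det_M3; toMC; closeH H.
Qed.

Lemma sq0 (a b : R) : a ^+ 2 + b ^+ 2 = 0 -> a = 0 /\ b = 0.
Proof.
move/eqP; rewrite paddr_eq0 ?sqr_ge0 // => /andP [/eqP Ha /eqP Hb].
by split; apply/eqP; rewrite -sqrf_eq0 ?Ha ?Hb.
Qed.

Theorem lemma1 (mu lam : R -> R -> R)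
  (f : R -> R -> 'cV[R]_3 -> R -> R -> 'cV[R]_3 -> R) :
  (forall A : 'M[R]_3, in_G A ->
     forall t th X p0 p1 V, mass_shell mu lam t th X p0 p1 V ->
       f t th (A *m X) p0 p1 (A *m V) = f t th X p0 p1 V) ->
  exists h : R -> R -> R -> R -> R,
    forall t th x y p0 p1 p2 p3, 0 < x ->
      mass_shell mu lam t th (polar x y) p0 p1 (dpolar x y p2 p3) ->
      f t th (polar x y) p0 p1 (dpolar x y p2 p3)
        = h t th p1 (p2 ^+ 2 + sinh x ^+ 2 * p3 ^+ 2).
Proof.
move=> Hinv.
pose P0 t th p1 q := Num.sqrt ((1 + exp (2 * lam t th) * p1 ^+ 2 + t ^+ 2 * q) / exp (2 * mu t th)).
exists (fun t th p1 q => f t th (coord3 1 0 0) (P0 t th p1 q) p1 (coord3 0 (Num.sqrt q) 0)).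
move=> t th x y p0 p1 p2 p3 Hx Hms.
pose q := p2 ^+ 2 + sinh x ^+ 2 * p3 ^+ 2.
pose a := p2. pose b := sinh x * p3.
have qE : q = a ^+ 2 + b ^+ 2 by rewrite /q /a /b -exprMn.
have q0 : 0 <= q by rewrite qE addr_ge0 // sqr_ge0.
pose r := Num.sqrt q.
have r2 : r ^+ 2 = q by rewrite sqr_sqrtr.
pose c := if r == 0 then 1 else a / r.
pose s := if r == 0 then 0 else b / r.
have [cr [sr cs1]] : c * r = a /\ s * r = b /\ c ^+ 2 + s ^+ 2 = 1.
  case: (eqVneq r 0) => Hr.
  - have : a ^+ 2 + b ^+ 2 = 0 by rewrite -qE -r2 Hr expr0n.
    move/sq0 => [-> ->]; rewrite /c /s Hr eqxx.
    by split; [rewrite mulr0 | split; [rewrite mulr0 | rewrite expr1n expr0n addr0]].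
  - rewrite /c /s (negPf Hr) !divfK //; split => //; split => //.
    by rewrite !expr_div_n -mulrDl -qE -r2 divff // expf_neq0.
pose A := Rot (cos y) (sin y) *m Boost (cosh x) (sinh x) *m Rot c s.
have [R1 R1d] := Rot_G _ _ (cs y).
have [B1 B1d] := Boost_G _ _ (ch_sh x).
have [R2 R2d] := Rot_G _ _ cs1.
have HA1 : A^T *m Jmx *m A = Jmx by rewrite /A; apply: G_mul => //; apply: G_mul.
have HAG : in_G A.
  split; first exact: HA1.
  split; first by rewrite /A !det_mulmx R1d B1d R2d !mulr1.
  have -> : A i0 i0 = cosh x.
    by rewrite /A /Rot /Boost !M3_mul mxE; simp; toMC; ring.
  exact: cosh_pos.
have hX : A *m coord3 1 0 0 = polar x y.
  rewrite /A -!mulmxA /Rot /Boost !M3_coord /polar; congr coord3; toMC; ring.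
have hV : A *m coord3 0 r 0 = dpolar x y p2 p3.
  rewrite /A -!mulmxA.
  have -> : Rot c s *m coord3 0 r 0 = coord3 0 a b.
    rewrite /Rot M3_coord; congr coord3; toMC; [ring | rewrite -cr; ring | rewrite -sr; ring].
  rewrite /Rot /Boost !M3_coord /dpolar !coord3Z coord3D; congr coord3; toMC; rewrite /b /a; ring.
case: Hms => Ht [Hhyp [Htan [Heq Hp0]]].
have mVV : mink (dpolar x y p2 p3) (dpolar x y p2 p3) = q.
  by rewrite -hV (mink_inv _ _ _ HA1) /mink !coord3E; toMC; rewrite -r2; ring.
have Hms0 : mass_shell mu lam t th (coord3 1 0 0) p0 p1 (coord3 0 r 0).
  split => //; split.
    split; first by rewrite /mink !coord3E; toMC; ring.
    by rewrite !coord3E ltr01.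
  split; first by rewrite /tangent_at /mink !coord3E; toMC; ring.
  split => //.
  have -> : mink (coord3 0 r 0) (coord3 0 r 0) = q by rewrite /mink !coord3E; toMC; rewrite -r2; ring.
  by rewrite -mVV.
have := Hinv A HAG t th _ p0 p1 _ Hms0; rewrite hX hV => ->.
congr f.
rewrite mVV in Heq.
have E1 : exp (2 * mu t th) != 0.
  by apply/eqP => E; move: (exp_pos (2 * mu t th)); rewrite E; apply: Rlt_irrefl.
rewrite /P0 -/q. have -> : 1 + exp (2 * lam t th) * p1 ^+ 2 + t ^+ 2 * q = exp (2 * mu t th) * p0 ^+ 2.
  apply: subr0_eq.
  transitivity (- exp (2 * mu t th) * p0 ^+ 2 + exp (2 * lam t th) * p1 ^+ 2 + t ^+ 2 * q + 1).
    ring.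
  by rewrite Heq addNr.
by rewrite (mulrC (exp _)) mulfK // sqrtr_sqr gtr0_norm.
Qed.
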